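(* Let $\Omega\subset\mathbb{R}^N$ be a domain with $0\in\partial\Omega$, and suppose there are $\rho,h>0$ and a $C^1$ function $\phi:\bar B_\rho(0)\subset\mathbb{R}^{N-1}\to(-h,h)$ with $\phi(0)=0$, $\nabla\phi(0)=0$, such that for $\mathcal{C}=B_\rho(0)\times(-h,h)$: $\mathcal{C}\cap\Omega=\{(x',x_N)\in\mathcal{C}:x_N<\phi(x')\}$ and $\mathcal{C}\cap\partial\Omega=\{(x',x_N)\in\mathcal{C}:x_N=\phi(x')\}$. Let $r>0$ and suppose that either (i) $\Omega$ satisfies condition $(\mathrm{L}_r)$, or (ii) $\nabla\phi$ is Lipschitz continuous with Lipschitz constant at most $\frac1r$. Then $$|\phi(x')|\le\frac{\max_{\bar B_{|x'|}(0)}|\nabla\phi|^2+1}{2r}|x'|^2\qquad\text{for all }x'\in B_\rho(0).$$ Consequently, in both cases, setting $\delta_0=\min\Big\{\frac{r}{\max_{\bar B_\rho(0)}|\nabla\phi|^2+1},\rho,\frac h2\Big\}$, one has $B_{\delta_0}((0,-\delta_0))\subset\Omega$ and $B_{\delta_0}((0,\delta_0))\subset\mathbb{R}^N\setminus\bar\Omega$ (two-sided supporting balls of radius $\delta_0$ at $0$).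
   Context: A domain is an open connected set; balls are open Euclidean balls; points of $\mathbb{R}^N$ are written $(x',x_N)$ with $x'\in\mathbb{R}^{N-1}$. $C^1$ regularity of $\partial\Omega$: for every $x_0\in\partial\Omega$ there exist $\rho,h>0$, a rigid map $T$ (rotation composed with translation) with $T(x_0)=0$, and a $C^1$ function $\phi:\bar B_\rho(0)\to(-h,h)$, $\phi(0)=0$, $\nabla\phi(0)=0$, with $\mathcal{C}\cap T(\Omega)=\{x_N<\phi(x')\}$ and $\mathcal{C}\cap T(\partial\Omega)=\{x_N=\phi(x')\}$ in $\mathcal{C}=B_\rho(0)\times(-h,h)$; then the outward unit normal $\vec n$ on $\partial\Omega$ is well defined. Condition $(\mathrm{L}_r)$: $\partial\Omega$ is $C^1$ regular and $|\vec n(x_0)-\vec n(y_0)|\le\frac1r|x_0-y_0|$ for all $x_0,y_0\in\partial\Omega$. *)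

(* Defs.v *)
From HB Require Import structures.
From mathcomp Require Import all_boot all_order all_algebra.
From mathcomp Require Import all_classical all_reals all_analysis.
Set Implicit Arguments. Unset Strict Implicit. Unset Printing Implicit Defensive.
Import Order.TTheory GRing.Theory Num.Theory.
Import numFieldNormedType.Exports.
Local Open Scope classical_set_scope.
Local Open Scope ring_scope.

Section Defs.
Variable R : realType.

Definition enorm k (v : 'rV[R]_k) : R := Num.sqrt (\sum_(i < k) (v 0 i) ^+ 2).

Definition eball k (c : 'rV[R]_k) (s : R) : set 'rV[R]_k := [set x | enorm (x - c) < s].
Definition cball k (c : 'rV[R]_k) (s : R) : set 'rV[R]_k := [set x | enorm (x - c) <= s].

Definition bd k (A : set 'rV[R]_k) : set 'rV[R]_k := closure A `\` interior A.

Definition xp n (y : 'rV[R]_(n + 1)) : 'rV[R]_n := lsubmx y.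
Definition xN n (y : 'rV[R]_(n + 1)) : R := rsubmx y 0 0.
Definition pt n (x' : 'rV[R]_n) (t : R) : 'rV[R]_(n + 1) := row_mx x' (const_mx t).

Definition cyl n (rho h : R) : set 'rV[R]_(n + 1) :=
  [set y | enorm (xp y) < rho /\ - h < xN y < h].

Definition grad_at n (f : 'rV[R]_n -> R) (x g : 'rV[R]_n) : Prop :=
  differentiable f x /\ forall v, 'd f x v = \sum_(i < n) g 0 i * v 0 i.

(* f is C^1 on the closed ball cball 0 rho, with gradient G (G is the
   gradient in the open ball, extended continuously to the closed ball). *)
Definition C1_cball n (rho : R) (f : 'rV[R]_n -> R) (G : 'rV[R]_n -> 'rV[R]_n) : Prop :=
  {within cball 0 rho, continuous f} /\
  {within cball 0 rho, continuous G} /\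
  (forall x, enorm x < rho -> grad_at f x (G x)).

Definition graph_chart n (A Bd : set 'rV[R]_(n + 1)) (rho h : R)
    (f : 'rV[R]_n -> R) (G : 'rV[R]_n -> 'rV[R]_n) : Prop :=
  0 < rho /\ 0 < h /\ C1_cball rho f G /\
  (forall x', enorm x' <= rho -> - h < f x' < h) /\
  f 0 = 0 /\ G 0 = 0 /\
  (forall y, cyl rho h y -> (A y <-> xN y < f (xp y))) /\
  (forall y, cyl rho h y -> (Bd y <-> xN y = f (xp y))).

(* Rotations (row-vector convention: x |-> x *m Q). *)
Definition rotation k (Q : 'M[R]_k) : Prop := Q *m Q^T = 1%:M /\ \det Q = 1.

Definition eN n : 'rV[R]_(n + 1) := pt 0 1.

(* C^1 chart of Omega at x0 via the rigid map T x = (x - x0) *m Q, with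
   outward unit normal nu at x0 (in the chart, the outward normal at 0 is e_N,
   hence nu = e_N Q^T in original coordinates). *)
Definition C1_chart_at n (Omega : set 'rV[R]_(n + 1)) (x0 nu : 'rV[R]_(n + 1)) : Prop :=
  exists (rho h : R) (Q : 'M[R]_(n + 1)) (f : 'rV[R]_n -> R) (G : 'rV[R]_n -> 'rV[R]_n),
    rotation Q /\
    graph_chart ((fun x => (x - x0) *m Q) @` Omega)
                ((fun x => (x - x0) *m Q) @` bd Omega) rho h f G /\
    nu = eN n *m Q^T.

Definition cond_L n (r : R) (Omega : set 'rV[R]_(n + 1)) : Prop :=
  exists nu : 'rV[R]_(n + 1) -> 'rV[R]_(n + 1),
    (forall x0, bd Omega x0 -> C1_chart_at Omega x0 (nu x0)) /\
    (forall x0 y0, bd Omega x0 -> bd Omega y0 ->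
       enorm (nu x0 - nu y0) <= enorm (x0 - y0) / r).

(* max over the closed ball of radius s of |G|^2 (attained, as G is
   continuous on the compact ball; written as a supremum). *)
Definition gmax2 n (G : 'rV[R]_n -> 'rV[R]_n) (s : R) : R :=
  sup [set enorm (G y) ^+ 2 | y in cball 0 s].

End Defs.

(* Main.v *)
Require Import Defs.
From HB Require Import structures.
From mathcomp Require Import all_boot all_order all_algebra.
From mathcomp Require Import all_classical all_reals all_analysis.
From mathcomp Require Import ring lra.
Set Implicit Arguments. Unset Strict Implicit. Unset Printing Implicit Defensive.
Import Order.TTheory GRing.Theory Num.Theory.
Import numFieldNormedType.Exports.
Local Open Scope classical_set_scope.
Local Open Scope ring_scope.
Section H1.
Variable R : realType.

Definition dot k (u v : 'rV[R]_k) : R := \sum_(i < k) u 0 i * v 0 i.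

Lemma dotC k (u v : 'rV[R]_k) : dot u v = dot v u.
Proof. by apply: eq_bigr => i _; rewrite mulrC. Qed.
Lemma dotDl k (u v w : 'rV[R]_k) : dot (u + v) w = dot u w + dot v w.
Proof. by rewrite /dot -big_split; apply: eq_bigr => i _; rewrite mxE mulrDl. Qed.
Lemma dotNl k (u v : 'rV[R]_k) : dot (- u) v = - dot u v.
Proof. by rewrite /dot -sumrN; apply: eq_bigr => i _; rewrite mxE mulNr. Qed.
Lemma dotZl k a (u v : 'rV[R]_k) : dot (a *: u) v = a * dot u v.
Proof. by rewrite /dot mulr_sumr; apply: eq_bigr => i _; rewrite mxE mulrA. Qed.
Lemma dotBl k (u v w : 'rV[R]_k) : dot (u - v) w = dot u w - dot v w.
Proof. by rewrite dotDl dotNl. Qed.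
Lemma dotDr k (u v w : 'rV[R]_k) : dot w (u + v) = dot w u + dot w v.
Proof. by rewrite dotC dotDl !(dotC w). Qed.
Lemma dotBr k (u v w : 'rV[R]_k) : dot w (u - v) = dot w u - dot w v.
Proof. by rewrite dotC dotBl !(dotC w). Qed.
Lemma dotZr k a (u v : 'rV[R]_k) : dot v (a *: u) = a * dot v u.
Proof. by rewrite dotC dotZl dotC. Qed.
Lemma dot0l k (u : 'rV[R]_k) : dot 0 u = 0.
Proof. by rewrite /dot big1 // => i _; rewrite mxE mul0r. Qed.
Lemma dot_ge0 k (u : 'rV[R]_k) : 0 <= dot u u.
Proof. by apply: sumr_ge0 => i _; rewrite -expr2 sqr_ge0. Qed.
Lemma dot_eq0 k (u : 'rV[R]_k) : dot u u = 0 -> u = 0.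
Proof.
move=> H; apply/rowP => i; rewrite mxE.
have := @psumr_eq0P _ _ _ (fun i => u 0 i * u 0 i) (fun j _ => _) H i isT.
by move=> /(_ _) /eqP; rewrite mulf_eq0 orbb => /(_ _) /eqP; apply => j; rewrite -expr2 sqr_ge0.
Qed.
Lemma enormE k (u : 'rV[R]_k) : enorm u = Num.sqrt (dot u u).
Proof. by rewrite /enorm; congr Num.sqrt; apply: eq_bigr => i _; rewrite expr2. Qed.
Lemma enorm_ge0 k (u : 'rV[R]_k) : 0 <= enorm u.
Proof. by rewrite /enorm sqrtr_ge0. Qed.
Lemma enorm_sq k (u : 'rV[R]_k) : enorm u ^+ 2 = dot u u.
Proof. by rewrite enormE sqr_sqrtr // dot_ge0. Qed.

Lemma CS k (u v : 'rV[R]_k) : dot u v ^+ 2 <= dot u u * dot v v.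
Proof.
have [v0|vn0] := eqVneq (dot v v) 0.
  by rewrite (dot_eq0 v0) dotC !dot0l expr0n /= mulr0.
have vp : 0 < dot v v by rewrite lt_def vn0 dot_ge0.
set t := dot u v / dot v v.
have := dot_ge0 (u - t *: v).
rewrite !dotBl !dotBr !dotZl !dotZr (dotC v u) => H.
have E : dot u u - t * dot u v - (t * dot u v - t * (t * dot v v)) = dot u u - dot u v ^+ 2 / dot v v.
  by rewrite /t; field.
by rewrite E subr_ge0 ler_pdivrMr // in H.
Qed.

Lemma CSn k (u v : 'rV[R]_k) : `|dot u v| <= enorm u * enorm v.
Proof.
rewrite !enormE -sqrtrM ?dot_ge0 // -sqrtr_sqr.
by rewrite ler_sqrt ?CS // mulr_ge0 // dot_ge0.
Qed.

Lemma enormZ k a (u : 'rV[R]_k) : enorm (a *: u) = `|a| * enorm u.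
Proof.
by rewrite !enormE dotZl dotZr mulrA -expr2 sqrtrM ?sqr_ge0 // sqrtr_sqr.
Qed.

Lemma enormN k (u : 'rV[R]_k) : enorm (- u) = enorm u.
Proof. by rewrite -scaleN1r enormZ normrN normr1 mul1r. Qed.

Lemma enorm0 k : enorm (0 : 'rV[R]_k) = 0.
Proof. by rewrite enormE dot0l sqrtr0. Qed.

Lemma enormD k (u v : 'rV[R]_k) : enorm (u + v) <= enorm u + enorm v.
Proof.
have h1 := enorm_ge0 u; have h2 := enorm_ge0 v.
have h3 := enorm_ge0 (u + v).
rewrite -(@ler_pXn2r _ 2) // ?nnegrE ?addr_ge0 //.
rewrite enorm_sq dotDl !dotDr (dotC v u) sqrrD !enorm_sq.
have := CSn u v; have := ler_norm (dot u v).
lra.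
Qed.

Lemma xp_pt n (x : 'rV[R]_n) t : xp (pt x t) = x.
Proof. by rewrite /xp /pt row_mxKl. Qed.
Lemma xN_pt n (x : 'rV[R]_n) t : xN (pt x t) = t.
Proof. by rewrite /xN /pt row_mxKr mxE. Qed.
Lemma pt_xp n (y : 'rV[R]_(n + 1)) : pt (xp y) (xN y) = y.
Proof.
rewrite /pt /xp /xN -[RHS]hsubmxK; congr row_mx.
by apply/matrixP => i j; rewrite !ord1 mxE.
Qed.
Lemma dot_pt n (a b : 'rV[R]_n) s t : dot (pt a s) (pt b t) = dot a b + s * t.
Proof.
rewrite /dot big_split_ord /= big_ord1; congr (_ + _).
  by apply: eq_bigr => i _; rewrite !row_mxEl.
by rewrite !row_mxEr !mxE.
Qed.
Lemma ptD n (a b : 'rV[R]_n) s t : pt a s + pt b t = pt (a + b) (s + t).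
Proof.
rewrite /pt add_row_mx; congr row_mx.
by apply/matrixP => i j; rewrite !mxE.
Qed.
Lemma ptZ n (a : 'rV[R]_n) c s : c *: pt a s = pt (c *: a) (c * s).
Proof.
rewrite /pt scale_row_mx; congr row_mx.
by apply/matrixP => i j; rewrite !mxE.
Qed.
Lemma ptN n (a : 'rV[R]_n) s : - pt a s = pt (- a) (- s).
Proof. by rewrite -scaleN1r ptZ !scaleN1r mulN1r. Qed.
Lemma ptB n (a b : 'rV[R]_n) s t : pt a s - pt b t = pt (a - b) (s - t).
Proof. by rewrite ptN ptD. Qed.
Lemma pt0 n : pt (0 : 'rV[R]_n) 0 = 0.
Proof.
apply/rowP => i; rewrite /pt mxE; case: splitP => j _; by rewrite !mxE.
Qed.
Lemma enorm_pt n (a : 'rV[R]_n) s : enorm (pt a s) ^+ 2 = enorm a ^+ 2 + s ^+ 2.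
Proof. by rewrite !enorm_sq dot_pt expr2. Qed.

Lemma dot_mx k (u v : 'rV[R]_k) : dot u v = (u *m v^T) 0 0.
Proof. by rewrite mxE; apply: eq_bigr => i _; rewrite mxE. Qed.
Lemma dot_mulmx k (u v : 'rV[R]_k) (Q : 'M[R]_k) : dot (u *m Q) v = dot u (v *m Q^T).
Proof. by rewrite !dot_mx trmx_mul trmxK mulmxA. Qed.

End H1.
Section H2.
Variable R : realType.

Lemma deriv_eps n (f : 'rV[R]_n -> R) z v : derivable f z v ->
  forall e, 0 < e -> exists2 d, 0 < d & forall t, 0 < `|t| < d ->
    `|(f (t *: v + z) - f z) / t - 'D_v f z| < e.
Proof.
move=> H e e0.
move: H => /cvgrPdist_lt /(_ e e0).
rewrite /dnbhs /within /= => /nbhs_ballP [d /= d0 Hd]; exists d => // t /andP[t0 td].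
have : ball 0 d t by rewrite /ball /= sub0r normrN.
move=> /Hd /(_ _); rewrite -normr_gt0 t0 => /(_ isT) /=.
by rewrite distrC mulrC.
Qed.

Lemma line_derive n (f : 'rV[R]_n -> R) (x y : 'rV[R]_n) t :
  derivable f (t *: x + y) x ->
  is_derive t 1 (fun s => f (s *: x + y)) ('D_x f (t *: x + y)).
Proof.
move=> H.
have E : (fun h : R => h^-1 *: (((fun s => f (s *: x + y)) \o shift t) (h *: 1) - f (t *: x + y)))
  = (fun h => h^-1 *: ((f \o shift (t *: x + y)) (h *: x) - f (t *: x + y))).
  apply/funext => h /=; congr (_ *: (f _ - _)).
  by rewrite /shift /= scaler1 scalerDl addrA.
apply: DeriveDef; first by rewrite /derivable E.
by rewrite /derive E.
Qed.

End H2.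
Section H3.
Variable R : realType.

Lemma quad_derive (c d t : R) :
  is_derive t 1 (fun s : R => c / 2 * s ^+ 2 + d * s) (c * t + d).
Proof.
have -> : (fun s : R => c / 2 * s ^+ 2 + d * s) = (c/2) \*: ((@id R) ^+ 2) + d \*: (@id R).
  by apply/funext => s /=.
apply: is_derive_eq.
rewrite expr1.
change ((c / 2) * (2 * t * 1) + d * 1 = c * t + d).
by rewrite !mulr1; field.
Qed.

Lemma itvoo01 (x : R) : x \in `]0, 1[ -> 0 <= x <= 1.
Proof. by rewrite in_itv /= => /andP[a b]; rewrite !ltW. Qed.
Lemma itvcc01 (x : R) : x \in `[0, 1] -> 0 <= x <= 1.
Proof. by rewrite in_itv /=. Qed.

Lemma seg_bound n rho (f : 'rV[R]_n -> R) (G : 'rV[R]_n -> 'rV[R]_n) z c d :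
  (forall x, enorm x < rho -> grad_at f x (G x)) -> enorm z < rho ->
  (forall t, 0 < t < 1 -> `|dot (G (t *: z)) z| <= c * t + d) ->
  `|f z - f 0| <= c / 2 + d.
Proof.
move=> Hg Hz Hb.
have Hin (t : R) : 0 <= t <= 1 -> enorm (t *: z + 0) < rho.
  move=> /andP[t0 t1]; rewrite addr0 enormZ ger0_norm //.
  have := enorm_ge0 z; nra.
have HD (t : R) : 0 <= t <= 1 -> is_derive t 1 (fun s => f (s *: z + 0)) (dot (G (t *: z)) z).
  move=> /Hin /Hg [df dE].
  have := line_derive (diff_derivable (v := z) df).
  by rewrite deriveE // dE addr0.
set F := (fun s => f (s *: z + 0)).
set Q := (fun s : R => c / 2 * s ^+ 2 + d * s).
have F1 : F 1 = f z by rewrite /F scale1r addr0.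
have F0 : F 0 = f 0 by rewrite /F scale0r addr0.
have Q1 : Q 1 = c / 2 + d by rewrite /Q expr1n !mulr1.
have Q0 : Q 0 = 0 by rewrite /Q expr0n /= !mulr0 addr0.
have HDg (x : R) : 0 <= x <= 1 -> is_derive x 1 (F - Q) (dot (G (x *: z)) z - (c * x + d)).
  move=> xi; exact: is_deriveB (HD x xi) (quad_derive c d x).
have HDh (x : R) : 0 <= x <= 1 -> is_derive x 1 (F + Q) (dot (G (x *: z)) z + (c * x + d)).
  move=> xi; exact: is_deriveD (HD x xi) (quad_derive c d x).
have Cg : {within `[0, 1], continuous (F - Q)}.
  by apply: derivable_within_continuous => x /itvcc01 /HDg [].
have Ch : {within `[0, 1], continuous (F + Q)}.
  by apply: derivable_within_continuous => x /itvcc01 /HDh [].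
have [x1 /[dup] x1i /itvoo01 x1b E1] := MVT ltr01 (fun x xi => HDg x (itvoo01 xi)) Cg.
have [x2 /[dup] x2i /itvoo01 x2b E2] := MVT ltr01 (fun x xi => HDh x (itvoo01 xi)) Ch.
have e1 : (F - Q) 1 - (F - Q) 0 = (F 1 - Q 1) - (F 0 - Q 0) by [].
have e2 : (F + Q) 1 - (F + Q) 0 = (F 1 + Q 1) - (F 0 + Q 0) by [].
move: E1 E2; rewrite e1 e2 F1 F0 Q1 Q0 !subr0 !mulr1 => E1 E2.
have B1 : 0 < x1 < 1 by move: x1i; rewrite in_itv.
have B2 : 0 < x2 < 1 by move: x2i; rewrite in_itv.
have := Hb _ B1; have := Hb _ B2.
rewrite !ler_norml => /andP[a1 a2] /andP[a3 a4].
apply/andP; split; lra.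
Qed.
End H3.
Section H4.
Variable R : realType.

Lemma halfsp n (A Bd : set 'rV[R]_(n + 1)) rho h (f : 'rV[R]_n -> R) Gf z (w : 'rV[R]_(n + 1)) :
  graph_chart A Bd rho h f Gf -> enorm z < rho ->
  (dot w (pt (- Gf z) 1) < 0 -> exists2 e, 0 < e & forall t, 0 < t < e -> A (pt z (f z) + t *: w)) /\
  (0 < dot w (pt (- Gf z) 1) -> exists2 e, 0 < e & forall t, 0 < t < e -> ~ A (pt z (f z) + t *: w)).
Proof.
move=> [rho0 [h0 [[_ [_ Hgr]] [Hfh [_ [_ [HA _]]]]]]] zr.
have [df dE] := Hgr z zr.
set w' := xp w; set a := xN w.
have wE : w = pt w' a by rewrite pt_xp.
set D := dot (Gf z) w'.
have DE : 'D_w' f z = D by rewrite deriveE // dE.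
have dm : dot w (pt (- Gf z) 1) = a - D.
  by rewrite wE dot_pt dotC dotNl mulr1 addrC.
have core : a != D -> exists2 e, 0 < e & forall t, 0 < t < e ->
   (A (pt z (f z) + t *: w) <-> f z + t * a < f (t *: w' + z)) /\
   `|(f (t *: w' + z) - f z) / t - D| < `|a - D| / 2.
  move=> aD.
  have e0 : 0 < `|a - D| / 2 by rewrite divr_gt0 // normr_gt0 subr_eq0.
  have [d1 d10 Hd1] := deriv_eps (diff_derivable (v := w') df) e0.
  rewrite DE in Hd1.
  have fz : - h < f z < h := Hfh z (ltW zr).
  have ez := enorm_ge0 z; have ew := enorm_ge0 w'.
  have d20 : 0 < (rho - enorm z) / (enorm w' + 1).
    by rewrite divr_gt0 // ?subr_gt0 //; lra.
  have d30 : 0 < (h - `|f z|) / (`|a| + 1).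
    apply: divr_gt0; first by rewrite subr_gt0 ltr_norml.
    by have := normr_ge0 a; lra.
  exists (Num.min d1 (Num.min ((rho - enorm z) / (enorm w' + 1)) ((h - `|f z|) / (`|a| + 1)))).
    by rewrite !lt_min d10 d20 d30.
  move=> t /andP[t0]; rewrite !lt_min => /andP[td1 /andP[td2 td3]].
  split; last by apply: Hd1; rewrite gtr0_norm // t0 td1.
  have P : pt z (f z) + t *: w = pt (t *: w' + z) (f z + t * a) by rewrite wE ptZ ptD addrC.
  rewrite P; apply: iff_trans (HA _ _) _; last by rewrite xN_pt xp_pt.
  split; rewrite ?xp_pt ?xN_pt.
    apply: le_lt_trans (enormD _ _) _.
    rewrite enormZ gtr0_norm //.
    move: td2; rewrite ltr_pdivlMr; last by lra.
    nra.
  move: td3; rewrite ltr_pdivlMr; last by have := normr_ge0 a; lra.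
  have := ler_norm a; have := ler_norm (- a); have := ler_norm (f z); have := ler_norm (- f z).
  rewrite !normrN => Ha1 Ha2 Hf1 Hf2 H3.
  apply/andP; split; nra.
split => Hs.
  have aD : a != D by apply/eqP => aD; move: Hs; rewrite dm aD subrr ltxx.
  have [e e0 He] := core aD; exists e => // t tb.
  have [Heq Hq] := He t tb; apply/Heq.
  move: tb => /andP[t0 _].
  move: Hq; set q := (f (t *: w' + z) - f z) / t => Hq.
  have qE : f (t *: w' + z) - f z = q * t by rewrite /q divfK // gt_eqF.
  have aD' : a - D < 0 by rewrite -dm.
  move: Hq; rewrite (ltr0_norm aD') ltr_norml => /andP[H1 H2].
  nra.
have aD : a != D by apply/eqP => aD; move: Hs; rewrite dm aD subrr ltxx.
have [e e0 He] := core aD; exists e => // t tb.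
have [Heq Hq] := He t tb; move/Heq.
move: tb => /andP[t0 _].
move: Hq; set q := (f (t *: w' + z) - f z) / t => Hq.
have qE : f (t *: w' + z) - f z = q * t by rewrite /q divfK // gt_eqF.
have aD' : 0 < a - D by rewrite -dm.
move: Hq; rewrite (gtr0_norm aD') ltr_norml => /andP[H1 H2] H3.
nra.
Qed.

End H4.
Section H5.
Variable R : realType.

Definition nrm n (g : 'rV[R]_n) : 'rV[R]_(n + 1) :=
  (Num.sqrt (1 + enorm g ^+ 2))^-1 *: pt (- g) 1.

Lemma dotNr k (u v : 'rV[R]_k) : dot u (- v) = - dot u v.
Proof. by rewrite dotC dotNl dotC. Qed.

Lemma sq_pos n (g : 'rV[R]_n) : 0 < Num.sqrt (1 + enorm g ^+ 2).
Proof. by rewrite sqrtr_gt0; have := sqr_ge0 (enorm g); lra. Qed.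

Lemma nrm_unit n (g : 'rV[R]_n) : dot (nrm g) (nrm g) = 1.
Proof.
rewrite /nrm dotZl dotZr dot_pt dotNl dotNr opprK -enorm_sq.
have s0 := sq_pos g.
have sE : Num.sqrt (1 + enorm g ^+ 2) ^+ 2 = 1 + enorm g ^+ 2.
  by rewrite sqr_sqrtr //; have := sqr_ge0 (enorm g); lra.
move: s0 sE; set s := Num.sqrt _ => s0 sE.
rewrite mulrA -expr2 mul1r exprVn sE addrC mulVf //.
by apply: lt0r_neq0; have := sqr_ge0 (enorm g); lra.
Qed.

Lemma eN_unit n : dot (eN R n) (eN R n) = 1.
Proof. by rewrite /eN dot_pt dot0l add0r mulr1. Qed.

Lemma NU n (Omega : set 'rV[R]_(n + 1)) rho h phi G z nu :
  graph_chart Omega (bd Omega) rho h phi G -> enorm z < rho ->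
  C1_chart_at Omega (pt z (phi z)) nu -> nu = nrm (G z).
Proof.
move=> Hc zr [rho2 [h2 [Q [f2 [G2 [[QQ _] [Hc2 nuE]]]]]]].
set X := pt z (phi z).
have QtQ : Q^T *m Q = 1%:M := mulmx1C QQ.
have nu1 : dot nu nu = 1.
  rewrite nuE dot_mulmx trmxK -mulmxA QtQ mulmx1 eN_unit //.
have m1 := nrm_unit (G z).
apply/eqP; apply: contraT => Hne.
have dlt : dot nu (nrm (G z)) < 1.
  have : 0 < dot (nu - nrm (G z)) (nu - nrm (G z)).
    rewrite lt_def dot_ge0 andbT; apply/eqP => /dot_eq0 /eqP.
    by rewrite subr_eq0 (negPf Hne).
  rewrite !dotBl !dotBr nu1 m1 (dotC (nrm (G z)) nu); lra.
have [rho20 [h20 [_ [_ [f20 [G20 _]]]]]] := Hc2.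
have e0r : enorm (0 : 'rV[R]_n) < rho2 by rewrite enorm0.
set w := nrm (G z) - nu.
have [H2in _] := halfsp (w *m Q) Hc2 e0r.
have [e1 e10 He1] : exists2 e, 0 < e & forall t, 0 < t < e ->
    ((fun x => (x - X) *m Q) @` Omega) (pt 0 (f2 0) + t *: (w *m Q)).
  apply: H2in; rewrite G20 oppr0 -/(eN R n) dot_mulmx -nuE /w dotBl nu1.
  by rewrite dotC; lra.
have [_ H1out] := halfsp w Hc zr.
have [e2 e20 He2] : exists2 e, 0 < e & forall t, 0 < t < e -> ~ Omega (X + t *: w).
  apply: H1out.
  have -> : pt (- G z) 1 = Num.sqrt (1 + enorm (G z) ^+ 2) *: nrm (G z).
    by rewrite /nrm scalerA mulfV ?scale1r // gt_eqF // sq_pos.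
  rewrite dotZr mulr_gt0 ?sq_pos // /w dotBl m1; lra.
set t := Num.min e1 e2 / 2.
have t0 : 0 < t by rewrite divr_gt0 // lt_min e10 e20.
have mm0 : 0 < Num.min e1 e2 by rewrite lt_min e10 e20.
have mm1 : Num.min e1 e2 <= e1 by rewrite ge_min lexx.
have mm2 : Num.min e1 e2 <= e2 by rewrite ge_min lexx orbT.
have te1 : t < e1 by rewrite /t; lra.
have te2 : t < e2 by rewrite /t; lra.
have tb1 : 0 < t < e1 by rewrite t0 te1.
have tb2 : 0 < t < e2 by rewrite t0 te2.
have [x Ox xE] := He1 t tb1.
exfalso; apply: (He2 t tb2).
have -> : X + t *: w = x.
  have : (x - X) *m Q *m Q^T = (t *: w) *m Q *m Q^T.
    by rewrite xE f20 pt0 add0r scalemxAl.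
  rewrite -!mulmxA QQ !mulmx1 => <-.
  by rewrite addrC subrK.
exact: Ox.
Qed.

End H5.
Section H6.
Variable R : realType.

Lemma coord_le_enorm k (u : 'rV[R]_k) (j : 'I_k) : `|u 0 j| <= enorm u.
Proof.
rewrite enormE -sqrtr_sqr ler_sqrt ?dot_ge0 //.
rewrite /dot (bigD1 j) //= expr2 lerDl.
by apply: sumr_ge0 => i _; rewrite -expr2 sqr_ge0.
Qed.

Lemma norm_le_enorm k (u : 'rV[R]_k) : `|u| <= enorm u.
Proof.
rewrite /Num.norm /= mx_normrE; apply: bigmax_le; first exact: enorm_ge0.
by move=> [i j] _ /=; rewrite (ord1 i); exact: coord_le_enorm.
Qed.

Lemma coord_le_norm k (u : 'rV[R]_k) (j : 'I_k) : `|u 0 j| <= `|u|.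
Proof. by rewrite [leRHS]/Num.norm /= mx_normrE; exact: (le_bigmax _ (fun ij : 'I_1 * 'I_k => `|u ij.1 ij.2|) (0, j)). Qed.

Lemma enorm_le_norm k (u : 'rV[R]_k) : enorm u <= k%:R * `|u|.
Proof.
rewrite enormE -[X in _ <= X]ger0_norm ?mulr_ge0 // -sqrtr_sqr ler_sqrt ?sqr_ge0 //.
apply: (@le_trans _ _ (\sum_(i < k) `|u|^+2)).
  apply: ler_sum => i _; rewrite -expr2 -real_normK ?num_real //.
  by rewrite lerXn2r ?nnegrE ?coord_le_norm.
rewrite sumr_const card_ord exprMn -[`|u| ^+ 2 *+ k]mulr_natl.
apply: ler_wpM2r; first exact: sqr_ge0.
by rewrite -natrX ler_nat; case: k {u} => // k; rewrite expnS leq_pmulr.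
Qed.

Lemma enorm_lip k (x y : 'rV[R]_k) : `|enorm x - enorm y| <= enorm (x - y).
Proof.
have h1 := enormD (x - y) y; have h2 := enormD (y - x) x.
rewrite subrK in h1; rewrite subrK -opprB enormN in h2.
rewrite ler_norml; apply/andP; split; lra.
Qed.

Lemma enorm_cont k : continuous (@enorm R k).
Proof.
move=> x; apply/(@cvgrPdist_lt _ _ _ (nbhs x) (nbhs_filter x)) => e e0.
have ek : 0 < e / (k%:R + 1) by rewrite divr_gt0 // ltr_wpDl.
near=> y.
have Hy : `|x - y| < e / (k%:R + 1).
  near: y; exact: (@cvgr_dist_lt _ _ _ (nbhs x) (nbhs_filter x) id x (@cvg_id _ (nbhs x)) _ ek).
apply: le_lt_trans (enorm_lip _ _) _.
apply: le_lt_trans (enorm_le_norm _) _.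
move: Hy; rewrite ltr_pdivlMr ?ltr_wpDl // => Hy.
have := normr_ge0 (x - y); have : (0 <= k%:R :> R) by [].
nra.
Unshelve. all: by end_near.
Qed.

Lemma cball_closed k (s : R) : closed (cball (0 : 'rV[R]_k) s).
Proof.
have -> : cball (0 : 'rV[R]_k) s = (@enorm R k) @^-1` [set x | x <= s].
  by apply/funext => y; rewrite /cball /= subr0.
apply: preimage_closed; last exact: closed_le.
by move=> y _; apply: enorm_cont.
Qed.

Lemma cball_compact k (s : R) : compact (cball (0 : 'rV[R]_k) s).
Proof.
apply: bounded_closed_compact; last exact: cball_closed.
exists s; split; first exact: num_real.
move=> M sM y; rewrite /cball /= subr0 => ys.
by apply: le_trans (norm_le_enorm y) _; apply: le_trans ys (ltW sM).
Qed.

Lemma G_bounded k (s : R) (G : 'rV[R]_k -> 'rV[R]_k) :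
  {within cball 0 s, continuous G} ->
  exists2 B, 0 <= B & forall y, cball 0 s y -> enorm (G y) <= B.
Proof.
move=> Gc.
have := compact_bounded (continuous_compact Gc (@cball_compact k s)).
move=> [M [_ HM]].
exists (k%:R * (`|M| + 1)); first by rewrite mulr_ge0 // addr_ge0.
move=> y ys; apply: le_trans (enorm_le_norm _) _.
rewrite ler_wpM2l //.
have : M < `|M| + 1 by apply: le_lt_trans (ler_norm M) _; rewrite ltrDl.
by move=> /HM /(_ (G y)) /=; apply; exists y.
Qed.

End H6.
Section H7.
Variable R : realType.

Lemma gmax2_facts n (G : 'rV[R]_n -> 'rV[R]_n) rho s :
  {within cball 0 rho, continuous G} -> 0 <= s -> s <= rho ->
  [/\ 0 <= gmax2 G s, (forall y, cball 0 s y -> enorm (G y) ^+ 2 <= gmax2 G s)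
    & gmax2 G s <= gmax2 G rho].
Proof.
move=> Gc s0 sr.
have [B B0 HB] := G_bounded Gc.
have c0 t : 0 <= t -> cball (0 : 'rV[R]_n) t 0 by move=> t0; rewrite /cball /= subr0 enorm0.
have hs t : 0 <= t -> t <= rho -> has_sup [set enorm (G y) ^+ 2 | y in cball (0 : 'rV[R]_n) t].
  move=> t0 tr; split; first by exists (enorm (G 0) ^+ 2); exists 0 => //; exact: c0.
  exists (B ^+ 2) => _ [y ys <-].
  rewrite lerXn2r ?nnegrE ?enorm_ge0 //; apply: HB.
  by move: ys; rewrite /cball /= => ys; apply: le_trans ys tr.
have ub : forall y, cball 0 s y -> enorm (G y) ^+ 2 <= gmax2 G s.
  by move=> y ys; rewrite /gmax2; apply: (sup_upper_bound (hs s s0 sr)); exists y.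
split => //.
- by apply: le_trans (sqr_ge0 (enorm (G 0))) (ub 0 (c0 s s0)).
- rewrite /gmax2; apply: sup_le.
  + move=> _ [y ys <-]; apply: le_down; exists y => //.
    by move: ys; rewrite /cball /= => ys; apply: le_trans ys sr.
  + by exists (enorm (G 0) ^+ 2); exists 0 => //; exact: c0.
  + exact: hs (le_trans s0 sr) (lexx rho).
Qed.

Lemma ball_below (d b q : R) : 0 < d -> 0 <= q -> q + (b + d) ^+ 2 < d ^+ 2 ->
  b * (2 * d) < - q.
Proof.
move=> d0 q0 H.
rewrite ltNge; apply/negP => Hb.
have u0 : 0 < b + d by nra.
have H1 : (2 * d ^+ 2 - q) <= 2 * d * (b + d) by nra.
have H2 : 0 <= 2 * d ^+ 2 - q by nra.
have H3 : (2 * d ^+ 2 - q) ^+ 2 <= (2 * d * (b + d)) ^+ 2.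
  by rewrite lerXn2r // nnegrE; nra.
nra.
Qed.

End H7.
Unset Implicit Arguments.

Theorem lemma4p1 (R : realType) (n : nat) (Omega : set 'rV[R]_(n + 1))
  (rho h r : R) (phi : 'rV[R]_n -> R) (G : 'rV[R]_n -> 'rV[R]_n) :
  open Omega -> connected Omega -> bd Omega 0 ->
  graph_chart Omega (bd Omega) rho h phi G ->
  0 < r ->
  (cond_L r Omega \/
   (forall x y, cball 0 rho x -> cball 0 rho y ->
      enorm (G x - G y) <= enorm (x - y) / r)) ->
  (forall x', enorm x' < rho ->
     `|phi x'| <= (gmax2 G (enorm x') + 1) / (2 * r) * enorm x' ^+ 2) /\
  (let delta0 := Num.min (r / (gmax2 G rho + 1)) (Num.min rho (h / 2)) in
   eball (pt 0 (- delta0)) delta0 `<=` Omega /\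
   eball (pt 0 delta0) delta0 `<=` ~` closure Omega).
Proof.
move=> Oop Ocon bd0 Hc r0 Hcase.
have Hc' := Hc.
move: Hc => [rho0 [h0 [[phic [Gc Hgr]] [Hfh [phi0 [G00 [HA HB]]]]]]].
have Part1 : forall x', enorm x' < rho ->
    `|phi x'| <= (gmax2 G (enorm x') + 1) / (2 * r) * enorm x' ^+ 2.
  move=> x' xr.
  have s0 := enorm_ge0 x'.
  have [M0 Mub _] := gmax2_facts Gc s0 (ltW xr).
  move: M0 Mub; set s := enorm x'; set M := gmax2 G s => M0 Mub.
  have {}s0 : 0 <= s := s0.
  suff K : forall t, 0 < t < 1 -> `|dot (G (t *: x')) x'| <= ((M + 1) / r * s ^+ 2) * t + 0.
    have := seg_bound Hgr xr K; rewrite phi0 subr0 addr0 => H.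
    apply: le_trans H _; rewrite le_eqVlt; apply/orP; left; apply/eqP.
    by field; rewrite gt_eqF.
  move=> t /andP[t0 t1].
  set z := t *: x'.
  have zs : enorm z = t * s by rewrite /z enormZ gtr0_norm.
  have zles : enorm z <= s by rewrite zs; nra.
  have zr : enorm z < rho by apply: le_lt_trans zles xr.
  suff Gz : enorm (G z) <= (M + 1) / r * enorm z.
    apply: le_trans (CSn _ _) _; rewrite addr0; rewrite zs in Gz.
    have := ler_wpM2r s0 Gz; set c := (M + 1) / r => H.
    apply: le_trans H _; rewrite le_eqVlt; apply/orP; left; apply/eqP.
    by rewrite /s; ring.
  have cbr y : enorm y <= rho -> cball (0 : 'rV[R]_n) rho y by rewrite /cball /= subr0.
  case: Hcase => [[nu [Hch Hlip]] | Hlip].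
  - set g := G z.
    set Z := pt z (phi z).
    have fzh : - h < phi z < h := Hfh z (ltW zr).
    have bdZ : bd Omega Z.
      apply/(HB Z _).2; first by rewrite /cyl /= xp_pt xN_pt zr.
      by rewrite xp_pt xN_pt.
    have nuZ : nu Z = nrm g := NU Hc' zr (Hch Z bdZ).
    have nu0 : nu 0 = nrm (G 0).
      apply: (NU Hc' (z := 0)); first by rewrite enorm0.
      by rewrite phi0 pt0; exact: Hch 0 bd0.
    have := Hlip Z 0 bdZ bd0; rewrite nuZ nu0 G00 subr0 => HL.
    have gM y : enorm y <= s -> enorm (G y) <= Num.sqrt M.
      move=> ys; rewrite -(ger0_norm (enorm_ge0 (G y))) -sqrtr_sqr.
      rewrite ler_sqrt //; apply: Mub; by rewrite /cball /= subr0.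
    have Hphi : `|phi z| <= Num.sqrt M * enorm z.
      have := @seg_bound _ _ rho phi G z 0 (Num.sqrt M * enorm z) Hgr zr.
      rewrite phi0 subr0 mul0r add0r; apply => t' /andP[t'0 t'1].
      rewrite mul0r add0r; apply: le_trans (CSn _ _) _.
      apply: ler_wpM2r; first exact: enorm_ge0.
      apply: gM; rewrite enormZ gtr0_norm //.
      by apply: le_trans zles; have := enorm_ge0 z; nra.
    have sM : Num.sqrt M ^+ 2 = M by rewrite sqr_sqrtr.
    have sM0 : 0 <= Num.sqrt M := sqrtr_ge0 M.
    have ez0 := enorm_ge0 z.
    have EZ : enorm Z ^+ 2 <= (1 + M) * enorm z ^+ 2.
      rewrite enorm_pt.
      have : phi z ^+ 2 <= (Num.sqrt M * enorm z) ^+ 2.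
        by rewrite -real_normK ?num_real // lerXn2r ?nnegrE ?mulr_ge0.
      by rewrite exprMn sM; lra.
    have ga : enorm g ^+ 2 <= M by apply: Mub; rewrite /cball /= subr0.
    set sg := Num.sqrt (1 + enorm g ^+ 2).
    have sg0 : 0 < sg := sq_pos g.
    have sgE : sg ^+ 2 = 1 + enorm g ^+ 2.
      by rewrite sqr_sqrtr //; have := sqr_ge0 (enorm g); lra.
    have n0 : nrm (0 : 'rV[R]_n) = pt 0 1.
      by rewrite /nrm enorm0 expr0n /= addr0 sqrtr1 invr1 scale1r oppr0.
    have LE : enorm (nrm g - nrm 0) ^+ 2 = sg^-1 ^+ 2 * enorm g ^+ 2 + (sg^-1 - 1) ^+ 2.
      rewrite n0 /nrm -/sg ptZ ptB subr0 mulr1 enorm_pt.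
      by rewrite enormZ enormN exprMn real_normK ?num_real.
    have iv : sg^-1 ^+ 2 * sg ^+ 2 = 1 by rewrite exprVn mulVf // expf_neq0 // gt_eqF.
    set L := enorm (nrm g - nrm 0).
    have L0 : 0 <= L := enorm_ge0 _.
    have EZ0 := enorm_ge0 Z.
    have HL' : L * r <= enorm Z by move: HL; rewrite ?subr0 ler_pdivlMr.
    have HL2 : (L * r) ^+ 2 <= enorm Z ^+ 2 by rewrite lerXn2r ?nnegrE ?mulr_ge0 // ltW.
    have Ga : enorm g ^+ 2 <= L ^+ 2 * sg ^+ 2.
      rewrite LE mulrDl -mulrA (mulrC (enorm g ^+ 2)) mulrA iv mul1r lerDl.
      by rewrite mulr_ge0 ?sqr_ge0.
    have G2 : (enorm g * r) ^+ 2 <= ((M + 1) * enorm z) ^+ 2.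
      rewrite !exprMn.
      have A1 : enorm g ^+ 2 * r ^+ 2 <= (L * r) ^+ 2 * sg ^+ 2.
        by have := ler_wpM2r (sqr_ge0 r) Ga; rewrite exprMn; nra.
      have A2 : (L * r) ^+ 2 * sg ^+ 2 <= (1 + M) * enorm z ^+ 2 * sg ^+ 2.
        by apply: ler_wpM2r; [exact: sqr_ge0| exact: le_trans HL2 EZ].
      rewrite sgE in A1 A2.
      have A3 : (1 + M) * enorm z ^+ 2 * (1 + enorm g ^+ 2) <= (1 + M) * enorm z ^+ 2 * (M + 1).
        apply: ler_wpM2l; first by rewrite mulr_ge0 ?sqr_ge0 //; lra.
        lra.
      have E4 : (M + 1) ^+ 2 * enorm z ^+ 2 = (1 + M) * enorm z ^+ 2 * (M + 1) by ring.
      rewrite E4; apply: le_trans A1 _; apply: le_trans A2 A3.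
    rewrite -(@ler_pXn2r _ 2) // ?nnegrE ?mulr_ge0 ?enorm_ge0 ?divr_ge0 ?addr_ge0 ?invr_ge0 ?(ltW r0) //.
    have -> : ((M + 1) / r * enorm z) ^+ 2 = ((M + 1) * enorm z) ^+ 2 / r ^+ 2.
      by field; rewrite gt_eqF.
    rewrite ler_pdivlMr ?exprn_gt0 // -exprMn; exact: G2.
  - have := Hlip z 0 (cbr z (ltW zr)) (cbr 0 _); rewrite enorm0 G00 !subr0.
    move=> /(_ (ltW rho0)) H.
    apply: le_trans H _.
    have P : 0 <= M * (enorm z / r) by rewrite mulr_ge0 // divr_ge0 // ?enorm_ge0 ?ltW.
    have -> : (M + 1) / r * enorm z = M * (enorm z / r) + enorm z / r by field; rewrite gt_eqF.
    lra.
split; first exact: Part1.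
move=> d.
have [Mr0 _ _] := gmax2_facts Gc (ltW rho0) (lexx rho).
have d0 : 0 < d by rewrite /d !lt_min divr_gt0 ?ltr_wpDl // rho0 divr_gt0.
have dr1 : d <= r / (gmax2 G rho + 1) by rewrite /d ge_min lexx.
have dr2 : d <= rho by rewrite /d !ge_min lexx orbT.
have dr3 : d <= h / 2 by rewrite /d !ge_min lexx !orbT.
have dM : d * (gmax2 G rho + 1) <= r by rewrite -ler_pdivlMr ?ltr_wpDl.
have key : forall y', enorm y' < d -> `|phi y'| * (2 * d) <= enorm y' ^+ 2.
  move=> y' yd.
  have yr : enorm y' < rho by apply: lt_le_trans dr2.
  have := Part1 y' yr.
  have [_ _ Mle] := gmax2_facts Gc (enorm_ge0 y') (ltW yr).
  move: Mle; set My := gmax2 G (enorm y'); set Mr := gmax2 G rho => Mle H.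
  have q0 := sqr_ge0 (enorm y').
  have H2 : `|phi y'| * (2 * r) <= (My + 1) * enorm y' ^+ 2.
    by move: H; rewrite mulrAC ler_pdivlMr ?mulr_gt0.
  have H3 : `|phi y'| * (2 * r) * d <= (Mr + 1) * enorm y' ^+ 2 * d.
    apply: ler_wpM2r; first exact: ltW.
    by apply: le_trans H2 _; apply: ler_wpM2r => //; rewrite lerD2r.
  have H4 := ler_wpM2r q0 dM.
  rewrite -/Mr in H4.
  rewrite -(ler_pM2r r0).
  move: H3 H4; set q := enorm y' ^+ 2; set p := `|phi y'|.
  lra.
have ydec (y : 'rV[R]_(n + 1)) (c : R) : enorm (y - pt 0 c) < d ->
    enorm (xp y) ^+ 2 + (xN y - c) ^+ 2 < d ^+ 2.
  move=> H; rewrite -enorm_pt.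
  have -> : pt (xp y) (xN y - c) = y - pt 0 c by rewrite -[in RHS](pt_xp y) ptB subr0.
  by rewrite ltr_pXn2r ?nnegrE ?enorm_ge0 ?ltW.
have small (y : 'rV[R]_(n + 1)) (c : R) : enorm (xp y) ^+ 2 + (xN y - c) ^+ 2 < d ^+ 2 ->
    enorm (xp y) < d /\ `|xN y - c| < d.
  move=> H; split; rewrite -(@ltr_pXn2r _ 2) ?nnegrE ?enorm_ge0 ?normr_ge0 ?(ltW d0) //.
    by have := sqr_ge0 (xN y - c); lra.
  by rewrite real_normK ?num_real //; have := sqr_ge0 (enorm (xp y)); lra.
split.
- move=> y; rewrite /eball /= => /ydec Hy0.
  have [yd bd'] := small y (- d) Hy0.
  move: Hy0 bd'; rewrite opprK => Hy bd'.
  have Hk := key _ yd.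
  have Hb := ball_below d0 (sqr_ge0 _) Hy.
  have cy : cyl rho h y.
    split; first by apply: lt_le_trans dr2.
    move: bd'; rewrite ltr_norml => /andP[b1 b2]; apply/andP; split; lra.
  apply/(HA y cy).2.
  have := ler_norm (- phi (xp y)); rewrite normrN.
  move: Hk Hb; set q := enorm (xp y) ^+ 2; set b := xN y; set p := `|phi (xp y)|.
  nra.
- move=> y; rewrite /eball /= => /ydec Hy.
  have [yd bd'] := small y d Hy.
  have Hk := key _ yd.
  have Hb : - xN y * (2 * d) < - enorm (xp y) ^+ 2.
    apply: ball_below => //; first exact: sqr_ge0.
    by have -> : (- xN y + d) ^+ 2 = (xN y - d) ^+ 2 by ring.
  have cy : cyl rho h y.
    split; first by apply: lt_le_trans dr2.
    move: bd'; rewrite ltr_norml => /andP[b1 b2]; apply/andP; split; lra.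
  have gt : phi (xp y) < xN y.
    have := ler_norm (phi (xp y)).
    move: Hk Hb; set q := enorm (xp y) ^+ 2; set b := xN y; set p := `|phi (xp y)|.
    nra.
  move=> Hcl.
  have nO : ~ Omega y by move=> /(HA y cy).1; lra.
  have nB : ~ bd Omega y by move=> /(HB y cy).1; lra.
  apply: nB; split => //.
  by move=> /interior_subset.
Qed.
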